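(* Let $n\ge 6$, $1\le k\le n-1$, let $I,J$ be tightly $r$-interlacing $k$-subsets of $\{1,\dots,n\}$ with $I\setminus J=\{i_1,\dots,i_r\}$, $J\setminus I=\{j_1,\dots,j_r\}$, $1\le i_1<j_1<i_2<j_2<\dots<i_r<j_r\le n$, let $b_1,\dots,b_{2r}\in\mathbb{C}[[t]]$ with $\sum_{l=1}^{2r}b_l=0$, and put $S_m=\sum_{g=1}^m b_g$. If $\varphi=(\varphi_i)_{i=1}^n$ is an endomorphism of $\mathbb{M}(I,J)$, then there are $a,b,c,d\in\mathbb{C}[[t]]$ such that $t\mid c$, and $t\mid (d-a)S_{2m}-S_{2m}^2\,t^{-1}c$ for every $m=1,\dots,r-1$, and $\varphi_{j_r}=\begin{pmatrix}a&b\\c&d\end{pmatrix}$, $\varphi_{i_l}=\begin{pmatrix}a+S_{2l-1}t^{-1}c & tb+(d-a)S_{2l-1}-S_{2l-1}^2t^{-1}c\\ t^{-1}c & d-S_{2l-1}t^{-1}c\end{pmatrix}$, $\varphi_{j_l}=\begin{pmatrix}a+S_{2l}t^{-1}c & b+t^{-1}\big((d-a)S_{2l}-S_{2l}^2t^{-1}c\big)\\ c & d-S_{2l}t^{-1}c\end{pmatrix}$ for $l=1,\dots,r$, and $\varphi_i=\varphi_{i-1}$ for every $i\in (I\cap J)\cup(I^c\cap J^c)$ (indices of vertices taken modulo $n$, vertex $0$ = vertex $n$).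
   Context: $\Gamma_n$ is the quiver with vertices $1,\dots,n$ on a cycle (vertex $0$ identified with $n$), arrows $x_i\colon i-1\to i$, $y_i\colon i\to i-1$. $B_{k,n}$ is its completed path algebra modulo the closure of the ideal generated by $xy=yx$ and $x^k=y^{n-k}$ at every vertex; its centre is $\mathbb{C}[[t]]$, $t=\sum_i x_iy_i$. $I,J$ are tightly $r$-interlacing if there are $\{i_1,i_3,\dots,i_{2r-1}\}\subset I\setminus J$, $\{i_2,\dots,i_{2r}\}\subset J\setminus I$ with $i_1<i_2<\dots<i_{2r}<i_1$ cyclically, no larger such subsets exist, and $|I\cap J|=k-r$. The module $\mathbb{M}(I,J)$ has $V_i=\mathbb{C}[[t]]^2$ at each vertex, with $x_{i_l}=\begin{pmatrix}t&b_{2l-1}\\0&1\end{pmatrix}$, $y_{i_l}=\begin{pmatrix}1&-b_{2l-1}\\0&t\end{pmatrix}$, $x_{j_l}=\begin{pmatrix}1&b_{2l}\\0&t\end{pmatrix}$, $y_{j_l}=\begin{pmatrix}t&-b_{2l}\\0&1\end{pmatrix}$ ($l=1,\dots,r$), $x_i=tE$, $y_i=E$ for $i\notin I\cup J$, and $x_i=E$, $y_i=tE$ for $i\in I\cap J$ ($E$ the $2\times 2$ identity). An endomorphism is a tuple of $2\times2$ matrices $\varphi_i$ over $\mathbb{C}[[t]]$ with $x_i\varphi_{i-1}=\varphi_ix_i$ and $y_i\varphi_i=\varphi_{i-1}y_i$ for all $i$. Notation: if $t^dv=w$ for a positive integer $d$, then $t^{-d}w$ denotes $v$. *)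

(* Defs.v *)
From HB Require Import structures.
From mathcomp Require Import all_boot all_order all_algebra.
From mathcomp Require Import reals complex.
Set Implicit Arguments. Unset Strict Implicit. Unset Printing Implicit Defensive.
Import Order.TTheory GRing.Theory Num.Theory.
Local Open Scope ring_scope.

Definition CC (R : realType) := (R[i])%C.

(* Formal power series K[[t]] : a series is its coefficient sequence. *)
Definition fps (K : Type) := nat -> K.

Section FPS.
Variable K : comRingType.
Definition fzero : fps K := fun _ => 0.
Definition fone : fps K := fun n => if n == 0%N then 1 else 0.
Definition fadd (f g : fps K) : fps K := fun n => f n + g n.
Definition fopp (f : fps K) : fps K := fun n => - f n.
Definition fsub (f g : fps K) : fps K := fadd f (fopp g).
Definition fmul (f g : fps K) : fps K :=
  fun n => \sum_(m < n.+1) f m * g (n - m)%N.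
Definition ft : fps K := fun n => if n == 1%N then 1 else 0.
(* t | f  <->  constant coefficient vanishes *)
Definition tdvd (f : fps K) : Prop := f 0%N = 0.
(* t^{-1} f : the unique g with t g = f (when t | f); shift of coefficients *)
Definition tinv (f : fps K) : fps K := fun n => f n.+1.

Definition mat2 := 'M[fps K]_2.
Definition mx2 (a b c d : fps K) : mat2 :=
  \matrix_(i < 2, j < 2)
    if (i : nat) == 0%N then (if (j : nat) == 0%N then a else b)
    else (if (j : nat) == 0%N then c else d).
Definition mmul (A B : mat2) : mat2 :=
  \matrix_(i < 2, j < 2) fadd (fmul (A i 0) (B 0 j)) (fmul (A i 1) (B 1 j)).
Definition mE : mat2 := mx2 fone fzero fzero fone.
Definition mtE : mat2 := mx2 ft fzero fzero ft.

Fixpoint psum (b : nat -> fps K) (m : nat) : fps K :=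
  if m is m'.+1 then fadd (psum b m') (b m) else fzero.
End FPS.

(* vertices are 1..n; predecessor on the cycle (vertex 0 = vertex n) *)
Definition prevv (n v : nat) : nat := if v == 1%N then n else v.-1.

Definition ksubset (n k : nat) (I : seq nat) : bool :=
  [&& uniq I, all (fun i => 0 < i <= n)%N I & size I == k].

Definition cyc_sorted (s : seq nat) : Prop :=
  exists p, sorted ltn (rot p s).

(* s alternates: odd positions (a_1, a_3, ...) in I\J, even positions in J\I *)
Definition alternating (I J s : seq nat) : bool :=
  all (fun p => if odd p then (nth 0 s p \in J) && (nth 0 s p \notin I)
                else (nth 0 s p \in I) && (nth 0 s p \notin J))
      (iota 0 (size s)).

Definition interlace_witness (I J : seq nat) (r : nat) : Prop :=
  exists s : seq nat, [/\ size s = (2 * r)%N, cyc_sorted s & alternating I J s].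

Definition tightly_interlacing (k : nat) (I J : seq nat) (r : nat) : Prop :=
  [/\ interlace_witness I J r,
      (forall r', (r < r')%N -> ~ interlace_witness I J r') &
      size [seq x <- I | x \in J] = (k - r)%N].

Section Module.
Variable R : realType.
Local Notation C := (CC R).
Variables (n r : nat) (I J : seq nat) (iI jJ : nat -> nat) (b : nat -> fps C).

Definition ipos (v : nat) : nat := (index v (map iI (iota 1 r))).+1.
Definition jpos (v : nat) : nat := (index v (map jJ (iota 1 r))).+1.

Definition xarr (v : nat) : mat2 C :=
  if v \in I then
    if v \in J then mE C
    else mx2 (ft C) (b (2 * ipos v).-1) (fzero C) (fone C)
  else
    if v \in J then mx2 (fone C) (b (2 * jpos v)) (fzero C) (ft C)
    else mtE C.

Definition yarr (v : nat) : mat2 C :=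
  if v \in I then
    if v \in J then mtE C
    else mx2 (fone C) (fopp (b (2 * ipos v).-1)) (fzero C) (ft C)
  else
    if v \in J then mx2 (ft C) (fopp (b (2 * jpos v))) (fzero C) (fone C)
    else mE C.

Definition is_endo (phi : nat -> mat2 C) : Prop :=
  forall v, (1 <= v <= n)%N ->
    mmul (xarr v) (phi (prevv n v)) = mmul (phi v) (xarr v) /\
    mmul (yarr v) (phi v) = mmul (phi (prevv n v)) (yarr v).
End Module.

(* Main.v *)
Require Import Defs.
From HB Require Import structures.
From mathcomp Require Import all_boot all_order all_algebra.
From mathcomp Require Import reals complex boolp.
From mathcomp Require Import ring.
Set Implicit Arguments. Unset Strict Implicit. Unset Printing Implicit Defensive.
Import Order.TTheory GRing.Theory Num.Theory.
Local Open Scope ring_scope.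

Section FpsRing.
Variable K : comRingType.
Local Notation F := (fps K).

Lemma faddA : associative (@fadd K).
Proof. by move=> f g h; apply: funext => n; rewrite /fadd addrA. Qed.
Lemma faddC : commutative (@fadd K).
Proof. by move=> f g; apply: funext => n; rewrite /fadd addrC. Qed.
Lemma fadd0 : left_id (@fzero K) (@fadd K).
Proof. by move=> f; apply: funext => n; rewrite /fadd /fzero add0r. Qed.
Lemma faddN : left_inverse (@fzero K) (@fopp K) (@fadd K).
Proof. by move=> f; apply: funext => n; rewrite /fadd /fopp /fzero addNr. Qed.

HB.instance Definition _ := gen_eqMixin F.
HB.instance Definition _ := gen_choiceMixin F.
HB.instance Definition _ := GRing.isZmodule.Build F faddA faddC fadd0 faddN.

Definition Tp (N : nat) (f : F) : {poly K} := \poly_(i < N.+1) f i.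

Lemma fmul_poly N (f g : F) m : (m <= N)%N -> fmul f g m = (Tp N f * Tp N g)`_m.
Proof.
move=> hm; rewrite coefM /fmul; apply: eq_bigr => i _.
have hi : (i <= m)%N by rewrite -ltnS.
rewrite !coef_poly !ltnS (leq_trans hi hm) (leq_trans (leq_subr _ _) hm) //.
Qed.

Lemma fmulA : associative (@fmul K).
Proof.
move=> f g h; apply: funext => n.
have E1 : fmul f (fmul g h) n = (Tp n f * (Tp n g * Tp n h))`_n.
  rewrite coefM /fmul; apply: eq_bigr => i _.
  have hi : (i <= n)%N by rewrite -ltnS.
  by rewrite coef_poly ltnS hi -(fmul_poly _ _ (leq_subr _ _)).
have E2 : fmul (fmul f g) h n = ((Tp n f * Tp n g) * Tp n h)`_n.
  rewrite coefM /fmul; apply: eq_bigr => i _.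
  have hi : (i <= n)%N by rewrite -ltnS.
  by rewrite (coef_poly _ _ (n - i)) ltnS leq_subr -(fmul_poly _ _ hi).
by rewrite E1 E2 mulrA.
Qed.

Lemma fmulC : commutative (@fmul K).
Proof.
move=> f g; apply: funext => n.
by rewrite !(fmul_poly _ _ (leqnn n)) mulrC.
Qed.

Lemma fmul1 : left_id (@fone K) (@fmul K).
Proof.
move=> f; apply: funext => n; rewrite /fmul big_ord_recl /= subn0 /fone /= mul1r.
by rewrite big1 ?addr0 // => i _; rewrite mul0r.
Qed.

Lemma fmulDl : left_distributive (@fmul K) (@fadd K).
Proof.
move=> f g h; apply: funext => n; rewrite /fmul /fadd -big_split /=.
by apply: eq_bigr => i _; rewrite mulrDl.
Qed.

HB.instance Definition _ := GRing.Zmodule_isComPzRing.Build F fmulA fmulC fmul1 fmulDl.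

Lemma faddE (f g : F) : fadd f g = f + g. Proof. by []. Qed.
Lemma fmulE (f g : F) : fmul f g = f * g. Proof. by []. Qed.
Lemma foppE (f : F) : fopp f = - f. Proof. by []. Qed.
Lemma fsubE (f g : F) : fsub f g = f - g. Proof. by []. Qed.
Lemma fzeroE : fzero K = 0. Proof. by []. Qed.
Lemma foneE : fone K = 1. Proof. by []. Qed.


Lemma ftE (f : F) n : fmul (ft K) f n = if n is m.+1 then f m else 0.
Proof.
rewrite /fmul big_ord_recl /ft /= mul0r add0r.
case: n => [|m]; first by rewrite big_ord0.
rewrite big_ord_recl /= subSS subn0 mul1r big1 ?addr0 // => i _.
by rewrite /bump /= mul0r.
Qed.

Lemma tinv_t (f : F) : tinv (ft K * f) = f.
Proof. by apply: funext => m; rewrite /tinv -fmulE ftE. Qed.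

Lemma t_tinv (f : F) : tdvd f -> ft K * tinv f = f.
Proof.
move=> h; apply: funext => m; rewrite -fmulE ftE; case: m => [|m] //; by rewrite h.
Qed.

Lemma tdvd_t (f : F) : tdvd (ft K * f).
Proof. by rewrite /tdvd -fmulE ftE. Qed.

Lemma t_cancel (f g : F) : ft K * f = ft K * g -> f = g.
Proof. by move=> h; rewrite -(tinv_t f) h tinv_t. Qed.

Lemma tinvD (f g : F) : tinv (f + g) = tinv f + tinv g.
Proof. by []. Qed.
Lemma tinvN (f : F) : tinv (- f) = - tinv f.
Proof. by []. Qed.
Lemma tinv0 : tinv (0 : F) = 0.
Proof. by []. Qed.

Lemma tdvd_eq (f g : F) : f = ft K * g -> tdvd f /\ tinv f = g.
Proof. by move=> ->; split; [apply: tdvd_t | apply: tinv_t]. Qed.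


Lemma mx2E (a b c d : F) :
  [/\ mx2 a b c d 0 0 = a, mx2 a b c d 0 1 = b, mx2 a b c d 1 0 = c & mx2 a b c d 1 1 = d].
Proof. by rewrite /mx2 !mxE. Qed.

Lemma mx2_inj (a b c d a' b' c' d' : F) :
  mx2 a b c d = mx2 a' b' c' d' -> [/\ a = a', b = b', c = c' & d = d'].
Proof.
move=> h; have := mx2E a b c d; have := mx2E a' b' c' d'; rewrite h.
by case=> -> -> -> -> [].
Qed.

Lemma mx2_eta (M : mat2 K) : M = mx2 (M 0 0) (M 0 1) (M 1 0) (M 1 1).
Proof.
apply/matrixP => i j; rewrite mxE.
case: i => [[|[|i]] hi]; case: j => [[|[|j]] hj] //=;
  by congr (M _ _); apply: val_inj.
Qed.

Lemma mmul_mx2 (a b c d e f g h : F) :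
  mmul (mx2 a b c d) (mx2 e f g h) =
  mx2 (a * e + b * g) (a * f + b * h) (c * e + d * g) (c * f + d * h).
Proof.
apply/matrixP => i j; rewrite !mxE.
by case: i => [[|[|i]] hi]; case: j => [[|[|j]] hj] //=; rewrite !mxE.
Qed.

End FpsRing.

From mathcomp Require Import zify.

Section Main.
Variable R : realType.
Local Notation C := (CC R).
Local Notation F := (fps C).
Variables (n r : nat) (I J : seq nat) (iI jJ : nat -> nat) (b : nat -> F)
  (phi : nat -> mat2 C).
Hypothesis HI : forall x, ((x \in I) && (x \notin J)) = (x \in map iI (iota 1 r)).
Hypothesis HJ : forall x, ((x \in J) && (x \notin I)) = (x \in map jJ (iota 1 r)).
Hypothesis Hi1 : (1 <= iI 1)%N.
Hypothesis HjR : (jJ r <= n)%N.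
Hypothesis Hij : forall l, (1 <= l <= r)%N -> (iI l < jJ l)%N.
Hypothesis Hji : forall l, (1 <= l < r)%N -> (jJ l < iI l.+1)%N.
Hypothesis Hendo : is_endo n r I J iI jJ b phi.

Local Notation t := (ft C).

Lemma ord_ji l l' : (1 <= l)%N -> (l < l' <= r)%N -> (jJ l < iI l')%N.
Proof.
move=> h1; elim: l' => [|l' IH] // /andP[hl hr].
case: (ltngtP l l') => [lt|gt|eq].
- have h2 : (jJ l < iI l')%N by apply: IH; lia.
  have h3 : (iI l' < jJ l')%N by apply: Hij; lia.
  have h4 : (jJ l' < iI l'.+1)%N by apply: Hji; lia.
  lia.
- lia.
- by subst; apply: Hji; lia.
Qed.

Lemma ordf p q : (1 <= p <= r)%N -> (1 <= q <= r)%N ->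
  [/\ (iI p < jJ p)%N, (p < q -> jJ p < iI q)%N & (q < p -> jJ q < iI p)%N].
Proof.
move=> hp hq; split; first exact: Hij.
- by move=> h; apply: ord_ji; lia.
- by move=> h; apply: ord_ji; lia.
Qed.

Lemma low_iI l : (1 <= l <= r)%N -> (1 <= iI l)%N.
Proof.
move=> hl; have h1 : (1 <= 1 <= r)%N by lia.
have [a1 a2 a3] := ordf h1 hl; have := Hij hl.
case: (ltngtP 1 l) => h1l; last by subst.
  lia.
lia.
Qed.

Lemma up_jJ l : (1 <= l <= r)%N -> (jJ l <= n)%N.
Proof.
move=> hl; have hr : (1 <= r <= r)%N by lia.
have [b1 b2 b3] := ordf hl hr; have := Hij hr.
case: (ltngtP l r) => hlr; last by subst.
  lia.
lia.
Qed.

Lemma range_iI l : (1 <= l <= r)%N -> (1 <= iI l <= n)%N.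
Proof. move=> hl; have := low_iI hl; have := up_jJ hl; have := Hij hl; lia. Qed.

Lemma range_jJ l : (1 <= l <= r)%N -> (1 <= jJ l <= n)%N.
Proof. move=> hl; have := low_iI hl; have := up_jJ hl; have := Hij hl; lia. Qed.

Lemma iI_inj : {in iota 1 r &, injective iI}.
Proof.
move=> x y; rewrite !mem_iota => hx hy e.
have hx' : (1 <= x <= r)%N by lia.
have hy' : (1 <= y <= r)%N by lia.
have [a1 a2 a3] := ordf hx' hy'; have [b1 b2 b3] := ordf hy' hx'.
lia.
Qed.

Lemma jJ_inj : {in iota 1 r &, injective jJ}.
Proof.
move=> x y; rewrite !mem_iota => hx hy e.
have hx' : (1 <= x <= r)%N by lia.
have hy' : (1 <= y <= r)%N by lia.
have [a1 a2 a3] := ordf hx' hy'; have [b1 b2 b3] := ordf hy' hx'.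
lia.
Qed.

Lemma ipos_iI l : (1 <= l <= r)%N -> ipos r iI (iI l) = l.
Proof.
move=> hl; rewrite /ipos.
have -> : iI l = nth 0%N (map iI (iota 1 r)) l.-1.
  rewrite (nth_map 0%N) ?size_iota; last by lia.
  by rewrite nth_iota; [congr iI; lia | lia].
rewrite index_uniq ?size_map ?size_iota; [lia | lia |].
by rewrite (map_inj_in_uniq iI_inj) iota_uniq.
Qed.

Lemma jpos_jJ l : (1 <= l <= r)%N -> jpos r jJ (jJ l) = l.
Proof.
move=> hl; rewrite /jpos.
have -> : jJ l = nth 0%N (map jJ (iota 1 r)) l.-1.
  rewrite (nth_map 0%N) ?size_iota; last by lia.
  by rewrite nth_iota; [congr jJ; lia | lia].
rewrite index_uniq ?size_map ?size_iota; [lia | lia |].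
by rewrite (map_inj_in_uniq jJ_inj) iota_uniq.
Qed.

Definition plain v := ((v \in I) && (v \in J)) || ((v \notin I) && (v \notin J)).

Lemma plainP x : (forall l, (1 <= l <= r)%N -> x <> iI l /\ x <> jJ l) -> plain x.
Proof.
move=> H; rewrite /plain; case hI: (x \in I); case hJ: (x \in J) => //=.
- have : x \in map iI (iota 1 r) by rewrite -HI hI hJ.
  case/mapP => l; rewrite mem_iota => hl ex.
  have hl' : (1 <= l <= r)%N by lia.
  by case: (H l hl').
- have : x \in map jJ (iota 1 r) by rewrite -HJ hI hJ.
  case/mapP => l; rewrite mem_iota => hl ex.
  have hl' : (1 <= l <= r)%N by lia.
  by case: (H l hl').
Qed.

Lemma tkey (x y : F) : t * x = y * t -> y = x.
Proof. by move=> e; apply: t_cancel; rewrite mulrC -e. Qed.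

Lemma plain_step v : (1 <= v <= n)%N -> plain v -> phi v = phi (prevv n v).
Proof.
move=> hv hp; have [H1 _] := Hendo hv; move: H1; rewrite /xarr.
rewrite (mx2_eta (phi v)) (mx2_eta (phi (prevv n v))).
move: (phi v 0 0) (phi v 0 1) (phi v 1 0) (phi v 1 1) => q1 q2 q3 q4.
move: (phi _ 0 0) (phi _ 0 1) (phi _ 1 0) (phi _ 1 1) => p1 p2 p3 p4.
case/orP: hp => /andP[hI hJ].
- rewrite hI hJ /mE !mmul_mx2 => /mx2_inj[e1 e2 e3 e4].
  rewrite ?foneE ?fzeroE in e1 e2 e3 e4.
  rewrite !(mul1r, mul0r, mulr1, mulr0, addr0, add0r) in e1 e2 e3 e4.
  by rewrite e1 e2 e3 e4.
- rewrite (negbTE hI) (negbTE hJ) /mtE !mmul_mx2 => /mx2_inj[e1 e2 e3 e4].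
  rewrite ?foneE ?fzeroE in e1 e2 e3 e4.
  rewrite !(mul1r, mul0r, mulr1, mulr0, addr0, add0r) in e1 e2 e3 e4.
  by rewrite (tkey e1) (tkey e2) (tkey e3) (tkey e4).
Qed.


Lemma step_i l p1 p2 p3 p4 : (1 <= l <= r)%N ->
  phi (prevv n (iI l)) = mx2 p1 p2 p3 p4 ->
  let be := b (2 * l).-1 in
  exists q3, p3 = t * q3 /\
    phi (iI l) = mx2 (p1 + be * q3) (t * p2 + be * p4 - be * (p1 + be * q3))
                     q3 (p4 - be * q3).
Proof.
move=> hl hP /=.
have [H1 _] := Hendo (range_iI hl); move: H1; rewrite /xarr.
have hm : iI l \in map iI (iota 1 r) by apply: map_f; rewrite mem_iota; lia.
move: (hm); rewrite -HI => /andP[hI hJ].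
rewrite hI (negbTE hJ) ipos_iI // hP (mx2_eta (phi (iI l))) !mmul_mx2.
move: (phi (iI l) 0 0) (phi (iI l) 0 1) (phi (iI l) 1 0) (phi (iI l) 1 1) => q1 q2 q3 q4.
move=> /mx2_inj[e1 e2 e3 e4].
rewrite ?foneE ?fzeroE in e1 e2 e3 e4.
rewrite !(mul1r, mul0r, mulr1, mulr0, addr0, add0r) in e1 e2 e3 e4.
set be := b (2 * l).-1 in e1 e2 e3 e4 *.
exists q3; split; first by rewrite e3 mulrC.
have E1 : q1 = p1 + be * q3.
  by apply: t_cancel; rewrite mulrC -e1 e3; ring.
have E4 : q4 = p4 - be * q3 by rewrite e4; ring.
have E2 : q2 = t * p2 + be * p4 - be * q1 by rewrite e2; ring.
by rewrite E2 E4 E1.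
Qed.

Lemma step_j l p1 p2 p3 p4 : (1 <= l <= r)%N ->
  phi (prevv n (jJ l)) = mx2 p1 p2 p3 p4 ->
  let be := b (2 * l) in
  exists q2, t * q2 = p2 + be * p4 - be * p1 - be * be * p3 /\
    phi (jJ l) = mx2 (p1 + be * p3) q2 (t * p3) (p4 - be * p3).
Proof.
move=> hl hP /=.
have [H1 _] := Hendo (range_jJ hl); move: H1; rewrite /xarr.
have hm : jJ l \in map jJ (iota 1 r) by apply: map_f; rewrite mem_iota; lia.
move: (hm); rewrite -HJ => /andP[hJ hI].
rewrite hJ (negbTE hI) jpos_jJ // hP (mx2_eta (phi (jJ l))) !mmul_mx2.
move: (phi (jJ l) 0 0) (phi (jJ l) 0 1) (phi (jJ l) 1 0) (phi (jJ l) 1 1) => q1 q2 q3 q4.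
move=> /mx2_inj[e1 e2 e3 e4].
rewrite ?foneE ?fzeroE in e1 e2 e3 e4.
rewrite !(mul1r, mul0r, mulr1, mulr0, addr0, add0r) in e1 e2 e3 e4.
set be := b (2 * l) in e1 e2 e3 e4 *.
have E4 : q4 = p4 - be * p3.
  apply: t_cancel.
  have -> : t * q4 = t * p4 - q3 * be by rewrite e4; ring.
  by rewrite -e3; ring.
exists q2; split; last by rewrite E4 -e1 -e3.
have -> : t * q2 = (p2 + be * p4) - q1 * be by rewrite e2; ring.
by rewrite -e1; ring.
Qed.

Lemma chain u w : (u <= w)%N -> (forall v, (u < v <= w)%N -> phi v = phi v.-1) ->
  phi w = phi u.
Proof.
elim: w => [|w IH] h H; first by have -> : u = 0%N by lia.
case: (ltngtP u w.+1) => h'; last by rewrite h'.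
- rewrite (H w.+1) /=; last by lia.
  by apply: IH => [|v hv]; [lia | apply: H; lia].
- lia.
Qed.

Lemma chain_plain u w : (1 <= u)%N -> (u <= w)%N -> (w <= n)%N ->
  (forall v, (u < v <= w)%N -> plain v) -> phi w = phi u.
Proof.
move=> h1 h2 h3 H; apply: chain => // v hv.
have -> : v.-1 = prevv n v.
  by rewrite /prevv; case: eqP => [e|_] //; exfalso; lia.
apply: plain_step; [lia | exact: H].
Qed.

Lemma gap1 l x : (1 <= l <= r)%N -> (iI l < x < jJ l)%N -> plain x.
Proof.
move=> hl hx; apply: plainP => l' hl'.
have [a1 a2 a3] := ordf hl hl'; have [b1 b2 b3] := ordf hl' hl.
case: (ltngtP l l') => h; last by subst; lia.
  have := a2 h; lia.
have := b2 h; lia.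
Qed.

Lemma gap2 l x : (1 <= l < r)%N -> (jJ l < x < iI l.+1)%N -> plain x.
Proof.
move=> hl hx; apply: plainP => l' hl'.
have hl1 : (1 <= l <= r)%N by lia.
have hl2 : (1 <= l.+1 <= r)%N by lia.
have [a1 a2 a3] := ordf hl1 hl'; have [b1 b2 b3] := ordf hl' hl1.
have [c1 c2 c3] := ordf hl2 hl'.
case: (ltngtP l l') => h.
- case: (ltngtP l.+1 l') => h2; last by subst; lia.
    have := c2 h2; lia.
  lia.
- have := b2 h; lia.
- subst; lia.
Qed.

Lemma gap3 x : (0 < r)%N -> (jJ r < x)%N -> plain x.
Proof.
move=> hr hx; apply: plainP => l' hl'.
have hr' : (1 <= r <= r)%N by lia.
have [b1 b2 b3] := ordf hl' hr'; have := Hij hr'.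
case: (ltngtP l' r) => h; last by subst; lia.
  have := b2 h; lia.
lia.
Qed.

Lemma gap4 x : (0 < r)%N -> (x < iI 1)%N -> plain x.
Proof.
move=> hr hx; apply: plainP => l' hl'.
have h1 : (1 <= 1 <= r)%N by lia.
have [b1 b2 b3] := ordf h1 hl'; have := Hij hl'.
case: (ltngtP 1 l') => h; last by subst; lia.
  have := b2 h; lia.
lia.
Qed.


Definition Xf (a c d s : F) : F := (d - a) * s - s * s * tinv c.
Definition Mi (a bb c d s : F) : mat2 C :=
  mx2 (a + s * tinv c) ((t * bb + (d - a) * s) - s * s * tinv c) (tinv c) (d - s * tinv c).
Definition Mj (a bb c d s : F) : mat2 C :=
  mx2 (a + s * tinv c) (bb + tinv (Xf a c d s)) c (d - s * tinv c).

Lemma psumS m : psum b m.+1 = psum b m + b m.+1.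
Proof. by []. Qed.

Lemma wrap : (0 < r)%N -> phi (prevv n (iI 1)) = phi (jJ r).
Proof.
move=> hr; have hr' : (1 <= r <= r)%N by lia.
have h1r : (1 <= 1 <= r)%N by lia.
have [j1 j2] := andP (range_jJ hr'); have [i1 i2] := andP (range_iI h1r).
have hn : phi n = phi (jJ r).
  apply: chain_plain => //; move=> v hv; apply: gap3 => //; lia.
rewrite /prevv; case: eqP => [_|ne] //.
have h1 : phi 1 = phi n.
  rewrite (plain_step (v:=1%N)) //; first lia.
  by apply: gap4 => //; lia.
rewrite -hn -h1; apply: chain_plain => //; try lia.
move=> v hv; apply: gap4 => //; lia.
Qed.

Lemma induct a bb c d : (0 < r)%N -> phi (jJ r) = mx2 a bb c d -> tdvd c ->
  forall l, (1 <= l <= r)%N ->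
  [/\ phi (iI l) = Mi a bb c d (psum b (2 * l).-1),
      phi (jJ l) = Mj a bb c d (psum b (2 * l)) &
      tdvd (Xf a c d (psum b (2 * l)))].
Proof.
move=> hr hR hc; elim => [|l IH] hl; first by [].
have [hprev hX] : phi (prevv n (iI l.+1)) = Mj a bb c d (psum b (2 * l)) /\
                  tdvd (Xf a c d (psum b (2 * l))).
  case: l IH hl => [|l] IH hl.
  - have -> : psum b (2 * 0) = 0 by [].
    have eX : Xf a c d 0 = 0 by rewrite /Xf; ring.
    split; last by rewrite eX.
    rewrite wrap // hR /Mj eX tinv0.
    by rewrite !(mul0r, addr0, subr0).
  - have hl1 : (1 <= l.+1 <= r)%N by lia.
    have hl2 : (1 <= l.+2 <= r)%N by lia.
    have [_ hj hx] := IH hl1; split => //; rewrite -hj.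
    have [j1 j2] := andP (range_jJ hl1); have [i1 i2] := andP (range_iI hl2).
    have hji : (jJ l.+1 < iI l.+2)%N by apply: Hji; lia.
    have -> : prevv n (iI l.+2) = (iI l.+2).-1.
      by rewrite /prevv; case: eqP => // e; exfalso; lia.
    apply: chain_plain => //; try lia.
    move=> v hv; apply: (@gap2 l.+1) => //; lia.
rewrite /Mj in hprev.
have [q3 [e3 hi]] := step_i hl hprev.
have eq3 : q3 = tinv c by rewrite e3 tinv_t.
rewrite eq3 in hi.
have e21 : (2 * l.+1).-1 = (2 * l).+1 by lia.
have hiI : phi (iI l.+1) = Mi a bb c d (psum b (2 * l.+1).-1).
  rewrite hi e21 /Mi psumS.
  rewrite [t * (_ + _)]mulrDr (t_tinv hX) /Xf.
  congr mx2; ring.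
have [i1 i2] := andP (range_iI hl); have [j1 j2] := andP (range_jJ hl).
have hij : (iI l.+1 < jJ l.+1)%N by apply: Hij.
have hprevj : phi (prevv n (jJ l.+1)) = Mi a bb c d (psum b (2 * l.+1).-1).
  rewrite -hiI.
  have -> : prevv n (jJ l.+1) = (jJ l.+1).-1.
    by rewrite /prevv; case: eqP => // e; exfalso; lia.
  apply: chain_plain => //; try lia.
  move=> v hv; apply: (@gap1 l.+1) => //; lia.
rewrite /Mi in hprevj.
have [q2 [e2 hj]] := step_j hl hprevj.
have e22 : (2 * l.+1)%N = ((2 * l.+1).-1).+1 by lia.
move: e2 hj hiI; rewrite e22 psumS -e22.
set s := psum b (2 * l.+1).-1; set be := b (2 * l.+1).
move=> e2 hj hiI.
have eX : Xf a c d (s + be) = t * (q2 - bb) by rewrite mulrBr e2 /Xf; ring.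
have hX' : tdvd (Xf a c d (s + be)) by rewrite eX; apply: tdvd_t.
have q2E : q2 = bb + tinv (Xf a c d (s + be)) by rewrite eX tinv_t; ring.
split => //.
rewrite hj /Mj q2E (t_tinv hc).
congr mx2; ring.
Qed.

Lemma main_res : (0 < r)%N ->
  let S := psum b in
  exists a bb c d : fps (CC R),
    [/\ tdvd c,
        (forall m, (1 <= m <= r - 1)%N ->
           tdvd (fsub (fmul (fsub d a) (S (2 * m)%N))
                      (fmul (fmul (S (2 * m)%N) (S (2 * m)%N)) (tinv c)))),
        phi (jJ r) = mx2 a bb c d,
        (forall l, (1 <= l <= r)%N ->
           let s := S (2 * l).-1 in
           phi (iI l) =
             mx2 (fadd a (fmul s (tinv c)))
                 (fsub (fadd (fmul (ft _) bb) (fmul (fsub d a) s))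
                       (fmul (fmul s s) (tinv c)))
                 (tinv c)
                 (fsub d (fmul s (tinv c)))) &
        [/\ (forall l, (1 <= l <= r)%N ->
              let s := S (2 * l)%N in
              phi (jJ l) =
                mx2 (fadd a (fmul s (tinv c)))
                    (fadd bb (tinv (fsub (fmul (fsub d a) s)
                                         (fmul (fmul s s) (tinv c)))))
                    c
                    (fsub d (fmul s (tinv c)))) &
            (forall v, (1 <= v <= n)%N ->
              ((v \in I) && (v \in J)) || ((v \notin I) && (v \notin J)) ->
              phi v = phi (prevv n v))]].
Proof.
move=> hr S.
have hR := mx2_eta (phi (jJ r)).
move: hR; set a := phi (jJ r) 0 0; set bb := phi (jJ r) 0 1;
  set c := phi (jJ r) 1 0; set d := phi (jJ r) 1 1 => hR.
exists a, bb, c, d.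
have h1r : (1 <= 1 <= r)%N by lia.
have hc : tdvd c.
  have hp : phi (prevv n (iI 1)) = mx2 a bb c d by rewrite wrap.
  have [q3 [e3 _]] := step_i h1r hp.
  by rewrite e3; apply: tdvd_t.
have H := induct hr hR hc.
split => //.
- move=> m hm; have hm' : (1 <= m <= r)%N by lia.
  by have [_ _ hx] := H m hm'.
- by move=> l hl; have [hi _ _] := H l hl.
- split.
  + by move=> l hl; have [_ hj _] := H l hl.
  + by move=> v hv hp; apply: plain_step.
Qed.

End Main.

Unset Implicit Arguments.

Theorem proposition3p2 (R : realType) (n k r : nat) (I J : seq nat)
    (iI jJ : nat -> nat) (b : nat -> fps (CC R)) (phi : nat -> mat2 (CC R)) :
  (6 <= n)%N -> (1 <= k <= n - 1)%N ->
  ksubset n k I -> ksubset n k J ->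
  tightly_interlacing k I J r -> (0 < r)%N ->
  (* I \ J = {i_1,...,i_r}, J \ I = {j_1,...,j_r} *)
  (forall x, ((x \in I) && (x \notin J)) = (x \in map iI (iota 1 r))) ->
  (forall x, ((x \in J) && (x \notin I)) = (x \in map jJ (iota 1 r))) ->
  (* 1 <= i_1 < j_1 < i_2 < ... < i_r < j_r <= n *)
  (1 <= iI 1)%N -> (jJ r <= n)%N ->
  (forall l, (1 <= l <= r)%N -> (iI l < jJ l)%N) ->
  (forall l, (1 <= l < r)%N -> (jJ l < iI l.+1)%N) ->
  (* b_1 + ... + b_{2r} = 0 *)
  psum b (2 * r) = fzero (CC R) ->
  is_endo n r I J iI jJ b phi ->
  let S := psum b in
  exists a bb c d : fps (CC R),
    [/\ tdvd c,
        (forall m, (1 <= m <= r - 1)%N ->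
           tdvd (fsub (fmul (fsub d a) (S (2 * m)%N))
                      (fmul (fmul (S (2 * m)%N) (S (2 * m)%N)) (tinv c)))),
        phi (jJ r) = mx2 a bb c d,
        (forall l, (1 <= l <= r)%N ->
           let s := S (2 * l).-1 in
           phi (iI l) =
             mx2 (fadd a (fmul s (tinv c)))
                 (fsub (fadd (fmul (ft _) bb) (fmul (fsub d a) s))
                       (fmul (fmul s s) (tinv c)))
                 (tinv c)
                 (fsub d (fmul s (tinv c)))) &
        [/\ (forall l, (1 <= l <= r)%N ->
              let s := S (2 * l)%N in
              phi (jJ l) =
                mx2 (fadd a (fmul s (tinv c)))
                    (fadd bb (tinv (fsub (fmul (fsub d a) s)
                                         (fmul (fmul s s) (tinv c)))))
                    c
                    (fsub d (fmul s (tinv c)))) &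
            (forall v, (1 <= v <= n)%N ->
              ((v \in I) && (v \in J)) || ((v \notin I) && (v \notin J)) ->
              phi v = phi (prevv n v))]].
Proof.
Proof.
move=> _ _ _ _ _ hr HI HJ Hi1 HjR Hij Hji _ Hendo.
exact: (main_res HI HJ Hi1 HjR Hij Hji Hendo hr).
Qed.
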